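(* For $n\ge2$, there is a well-defined surjective homomorphism $\psi_H:TVH_n\to A_n$ with $\psi_H(x_{kl})=e$ ($1\le k\ne l\le n$) and $\psi_H(\gamma_j)=\gamma_j$, which is the identity on $A_n$. Its kernel $HL_n=\ker\psi_H$ is generated by the elements $x_{ij}^{(0)}=x_{ij}$, $x_{ij}^{(i)}=x_{ij}^{\gamma_i}$, $x_{ij}^{(j)}=x_{ij}^{\gamma_j}$, $x_{ij}^{(ij)}=x_{ij}^{\gamma_i\gamma_j}$ for $1\le i<j\le n$, and $TVH_n=HL_n\rtimes A_n$.
   Context: For $n\ge 2$, the twisted virtual braid group $TVB_n$ is the group with generators $\sigma_1,\dots,\sigma_{n-1}$, $\rho_1,\dots,\rho_{n-1}$, $\gamma_1,\dots,\gamma_n$ and defining relations: $\sigma_i\sigma_{i+1}\sigma_i=\sigma_{i+1}\sigma_i\sigma_{i+1}$ ($1\le i\le n-2$); $\sigma_i\sigma_j=\sigma_j\sigma_i$ ($|i-j|\ge 2$); $\rho_i^2=1$; $\rho_i\rho_j=\rho_j\rho_i$ ($|i-j|\ge2$); $\rho_i\rho_{i+1}\rho_i=\rho_{i+1}\rho_i\rho_{i+1}$ ($1\le i\le n-2$); $\sigma_i\rho_j=\rho_j\sigma_i$ ($|i-j|\ge 2$); $\rho_i\rho_{i+1}\sigma_i=\sigma_{i+1}\rho_i\rho_{i+1}$ ($1\le i\le n-2$); $\gamma_i^2=1$ and $\gamma_i\gamma_j=\gamma_j\gamma_i$ (all $i,j$); $\gamma_j\rho_i=\rho_i\gamma_j$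 and $\gamma_j\sigma_i=\sigma_i\gamma_j$ for $j\notin\{i,i+1\}$; $\rho_i\gamma_i=\gamma_{i+1}\rho_i$ ($1\le i\le n-1$); $\rho_i\sigma_i\rho_i=\gamma_{i+1}\gamma_i\sigma_i\gamma_i\gamma_{i+1}$ ($1\le i\le n-1$). $\varphi_H:TVB_n\to S_n$ is the homomorphism with $\sigma_i\mapsto e$, $\rho_i\mapsto(i,i+1)$, $\gamma_j\mapsto e$, and $TVH_n=\ker\varphi_H$. $A_n=\langle\gamma_1,\dots,\gamma_n\rangle\le TVH_n$. In $TVB_n$ define $x_{i,i+1}=\sigma_i$, $x_{i+1,i}=\rho_i\sigma_i\rho_i$ ($1\le i\le n-1$), and for $1\le i<j-1\le n-1$: $x_{ij}=\rho_{j-1}\cdots\rho_{i+1}\sigma_i\rho_{i+1}\cdots\rho_{j-1}$, $x_{ji}=\rho_{j-1}\cdots\rho_{i+1}\rho_i\sigma_i\rho_i\rho_{i+1}\cdots\rho_{j-1}$; the $x_{kl}$ and $\gamma_j$ generate $TVH_n$. Conjugation notation: $a^b=b^{-1}ab$. *)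

(* Defs.v *)
(* the group TVB_n is encoded by words in the
   generators and the congruence generated by free cancellation and the
   defining relations. Indices are 1-based as in the paper. *)
From Stdlib Require List.
From mathcomp Require Import all_boot.
Set Implicit Arguments. Unset Strict Implicit. Unset Printing Implicit Defensive.

Inductive gen := Sig of nat | Rho of nat | Gam of nat.

(* a letter is a generator with an inversion flag (true = inverse) *)
Definition letter := (gen * bool)%type.
Definition word := seq letter.

Definition sg i : letter := (Sig i, false).
Definition rh i : letter := (Rho i, false).
Definition gm j : letter := (Gam j, false).

Definition winv (w : word) : word := rev (map (fun l => (l.1, ~~ l.2)) w).

Definition conjw (a b : word) : word := winv b ++ a ++ b.

Definition gen_ok (n : nat) (x : gen) : bool :=
  match x with
  | Sig i => (1 <= i) && (i <= n - 1)
  | Rho i => (1 <= i) && (i <= n - 1)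
  | Gam j => (1 <= j) && (j <= n)
  end.

Definition valid (n : nat) (w : word) : bool := all (fun l => gen_ok n l.1) w.

Definition far (i j : nat) : bool := (i.+2 <= j) || (j.+2 <= i).

Inductive tvb_rel (n : nat) : word -> word -> Prop :=
| r_braid_s i : 1 <= i -> i <= n - 2 ->
    tvb_rel n [:: sg i; sg i.+1; sg i] [:: sg i.+1; sg i; sg i.+1]
| r_comm_s i j : 1 <= i <= n - 1 -> 1 <= j <= n - 1 -> far i j ->
    tvb_rel n [:: sg i; sg j] [:: sg j; sg i]
| r_inv_r i : 1 <= i <= n - 1 -> tvb_rel n [:: rh i; rh i] [::]
| r_comm_r i j : 1 <= i <= n - 1 -> 1 <= j <= n - 1 -> far i j ->
    tvb_rel n [:: rh i; rh j] [:: rh j; rh i]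
| r_braid_r i : 1 <= i -> i <= n - 2 ->
    tvb_rel n [:: rh i; rh i.+1; rh i] [:: rh i.+1; rh i; rh i.+1]
| r_comm_sr i j : 1 <= i <= n - 1 -> 1 <= j <= n - 1 -> far i j ->
    tvb_rel n [:: sg i; rh j] [:: rh j; sg i]
| r_mixed i : 1 <= i -> i <= n - 2 ->
    tvb_rel n [:: rh i; rh i.+1; sg i] [:: sg i.+1; rh i; rh i.+1]
| r_inv_g j : 1 <= j <= n -> tvb_rel n [:: gm j; gm j] [::]
| r_comm_g i j : 1 <= i <= n -> 1 <= j <= n ->
    tvb_rel n [:: gm i; gm j] [:: gm j; gm i]
| r_comm_gr i j : 1 <= i <= n - 1 -> 1 <= j <= n -> j != i -> j != i.+1 ->
    tvb_rel n [:: gm j; rh i] [:: rh i; gm j]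
| r_comm_gs i j : 1 <= i <= n - 1 -> 1 <= j <= n -> j != i -> j != i.+1 ->
    tvb_rel n [:: gm j; sg i] [:: sg i; gm j]
| r_rg i : 1 <= i <= n - 1 ->
    tvb_rel n [:: rh i; gm i] [:: gm i.+1; rh i]
| r_rsr i : 1 <= i <= n - 1 ->
    tvb_rel n [:: rh i; sg i; rh i] [:: gm i.+1; gm i; sg i; gm i; gm i.+1].

Inductive weq (n : nat) : word -> word -> Prop :=
| weq_refl w : weq n w w
| weq_sym w1 w2 : weq n w1 w2 -> weq n w2 w1
| weq_trans w1 w2 w3 : weq n w1 w2 -> weq n w2 w3 -> weq n w1 w3
| weq_rel u v l r : tvb_rel n l r -> weq n (u ++ l ++ v) (u ++ r ++ v)
| weq_free u v x b : weq n (u ++ [:: (x, b); (x, ~~ b)] ++ v) (u ++ v).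

(* phi_H : TVB_n -> S_n, sigma_i |-> e, rho_i |-> (i,i+1), gamma_j |-> e,
   realized as an action on {1,..,n} *)
Definition swap (i k : nat) : nat :=
  if k == i then i.+1 else if k == i.+1 then i else k.

Definition act (w : word) (k : nat) : nat :=
  foldr (fun l k => match l.1 with Rho i => swap i k | _ => k end) k w.

(* membership in TVH_n = ker phi_H *)
Definition in_TVH (n : nat) (w : word) : Prop :=
  valid n w /\ forall k, 1 <= k <= n -> act w k = k.

(* words in the gamma_j : representatives of elements of A_n *)
Definition gamma_word (n : nat) (w : word) : Prop :=
  valid n w /\ all (fun l => if l.1 is Gam _ then true else false) w.

Definition rhos (i j : nat) : word := [seq rh k | k <- rev (iota i.+1 (j - i - 1))].

Definition xw (i j : nat) : word :=
  if i < j then rhos i j ++ [:: sg i] ++ rev (rhos i j)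
  else rhos j i ++ [:: rh j; sg j; rh j] ++ rev (rhos j i).

Definition hl_gen (n : nat) (w : word) : Prop :=
  exists i j, [/\ 1 <= i, i < j, j <= n &
    [\/ w = xw i j, w = conjw (xw i j) [:: gm i], w = conjw (xw i j) [:: gm j]
      | w = conjw (xw i j) [:: gm i; gm j]]].

Definition gen_by (n : nat) (P : word -> Prop) (w : word) : Prop :=
  exists ws : seq (bool * word),
    (forall p, List.In p ws -> P p.2) /\
    weq n w (flatten [seq (if p.1 then winv p.2 else p.2) | p <- ws]).

(* Main.v *)
Require Import Defs.
From mathcomp Require Import all_boot.
From mathcomp Require Import zify.
From Stdlib Require Import Setoid Morphisms.
Set Implicit Arguments. Unset Strict Implicit. Unset Printing Implicit Defensive.
#[local] Hint Resolve weq_refl : core.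

Lemma weq_ctx n p q w1 w2 : weq n w1 w2 -> weq n (p ++ w1 ++ q) (p ++ w2 ++ q).
Proof.
elim=> {w1 w2}.
- by move=> w; exact: weq_refl.
- by move=> ? ? _ H; exact: weq_sym.
- by move=> ? ? ? _ H1 _ H2; exact: weq_trans H1 H2.
- move=> u v l r H.
  have := weq_rel (p ++ u) (v ++ q) H.
  by rewrite -!catA.
- move=> u v x b.
  have := weq_free n (p ++ u) (v ++ q) x b.
  by rewrite -!catA.
Qed.

Add Parametric Relation n : word (weq n)
  reflexivity proved by (@weq_refl n)
  symmetry proved by (@weq_sym n)
  transitivity proved by (@weq_trans n) as weq_setoid.

Add Parametric Morphism n : (@cat letter) with signature
  weq n ==> weq n ==> weq n as cat_mor.
Proof.
move=> x y H x' y' H'.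
apply: weq_trans (_ : weq n (y ++ x') _).
  by have := weq_ctx [::] x' H; rewrite /= .
by have := weq_ctx y [::] H'; rewrite !cats0.
Qed.

Add Parametric Morphism n x : (cons x) with signature
  weq n ==> weq n as cons_mor.
Proof. by move=> u v H; have := weq_ctx [:: x] [::] H; rewrite !cats0. Qed.


Lemma relT n l r w : tvb_rel n l r -> weq n (l ++ w) (r ++ w).
Proof. by move=> H; have := weq_rel [::] w H. Qed.

Lemma freeT n x b w : weq n ((x, b) :: (x, ~~ b) :: w) w.
Proof. by have := weq_free n [::] w x b. Qed.

Lemma winv_cat u v : winv (u ++ v) = winv v ++ winv u.
Proof. by rewrite /winv map_cat rev_cat. Qed.

Lemma winvK u : winv (winv u) = u.
Proof.
rewrite /winv map_rev revK -map_comp.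
elim: u => //= [[x b] u] ->. by rewrite negbK.
Qed.

Lemma winv_cons l u : winv (l :: u) = winv u ++ [:: (l.1, ~~ l.2)].
Proof. by rewrite -cat1s winv_cat. Qed.

Lemma cancelR n u : weq n (u ++ winv u) [::].
Proof.
elim: u => [|[x b] u IH] /=; first exact: weq_refl.
rewrite winv_cons /=.
have -> : (x, b) :: u ++ winv u ++ [:: (x, ~~ b)] =
   [:: (x,b)] ++ (u ++ winv u) ++ [:: (x, ~~ b)] by rewrite /= catA.
rewrite IH /=. exact: freeT.
Qed.

Lemma cancelL n u : weq n (winv u ++ u) [::].
Proof. by have := cancelR n (winv u); rewrite winvK. Qed.

Lemma cancelRT n u w : weq n (u ++ winv u ++ w) w.
Proof. by rewrite catA cancelR. Qed.

Lemma cancelLT n u w : weq n (winv u ++ u ++ w) w.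
Proof. by rewrite catA cancelL. Qed.

Lemma weq_winv n u v : weq n u v -> weq n (winv u) (winv v).
Proof.
move=> H.
apply: weq_trans (_ : weq n (winv u ++ v ++ winv v) _).
  by rewrite cancelR cats0.
apply: weq_trans (weq_ctx (winv u) (winv v) (weq_sym H) ) _.
exact: cancelLT.
Qed.


(* ---------- B. semantics: hyperoctahedral action ---------- *)
Definition fl (l : letter) (p : nat * bool) : nat * bool :=
  match l.1 with
  | Sig _ => p
  | Rho i => (swap i p.1, p.2)
  | Gam j => (p.1, (p.1 == j) (+) p.2)
  end.

Definition sact (w : word) (p : nat * bool) := foldr fl p w.

Lemma sact_cat u v p : sact (u ++ v) p = sact u (sact v p).
Proof. by rewrite /sact foldr_cat. Qed.

Ltac eqcases := repeat (match goal with |- context [?x == ?y] =>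
  lazymatch x with context [_ == _] => fail | _ =>
  lazymatch y with context [_ == _] => fail | _ =>
    case: (@eqP _ x y) => ? end end end).

Lemma swapK i k : swap i (swap i k) = k.
Proof. rewrite /swap. eqcases; lia. Qed.

Lemma flK l p : fl l (fl l p) = p.
Proof.
case: l p => [[i|i|j] b] [k c]; rewrite /fl /= ?swapK ?addbA ?addbb //.
Qed.



Lemma sact_rev_l w p : sact (rev w) (sact w p) = p.
Proof.
elim: w p => //= l w IH p.
by rewrite rev_cons -cats1 sact_cat /= flK IH.
Qed.

Lemma sact_rev_r w p : sact w (sact (rev w) p) = p.
Proof. by have := sact_rev_l (rev w) p; rewrite revK. Qed.

Lemma sact_winv w p : sact (winv w) p = sact (rev w) p.
Proof.
elim: w p => //= l w IH p.
by rewrite winv_cons rev_cons -cats1 !sact_cat IH.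
Qed.


Lemma rel_sact n l r p : tvb_rel n l r -> sact l p = sact r p.
Proof.
case: p => k c.
case=> /=; intros;
  repeat match goal with H : is_true (far _ _) |- _ => move: H; rewrite /far => /orP [?|?] end;
  rewrite /fl /= /swap; eqcases => /=;
  rewrite ?negbK; try (exfalso; lia); try (congr pair; lia).
Qed.

Lemma weq_sact n u v : weq n u v -> forall p, sact u p = sact v p.
Proof.
elim=> {u v}.
- by [].
- by move=> ? ? _ H p; rewrite H.
- by move=> ? ? ? _ H1 _ H2 p; rewrite H1 H2.
- by move=> u v l r H p; rewrite !sact_cat (rel_sact _ H).
- by move=> u v x b p; rewrite !sact_cat /= flK.
Qed.

Lemma act_sact w k b : act w k = (sact w (k, b)).1.
Proof.
elim: w => //= l w ->. by case: l => [[i|i|j] f].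
Qed.

Lemma weq_act n u v : weq n u v -> forall k, act u k = act v k.
Proof. by move=> H k; rewrite !(act_sact _ _ false) (weq_sact H). Qed.

Lemma sact_split w k b :
  sact w (k, b) = ((sact w (k, false)).1, b (+) (sact w (k, false)).2).
Proof.
elim: w => [|l w IH] /=; first by rewrite addbF.
rewrite IH; case: l => [[i|i|j] f]; rewrite /fl //=.
by rewrite addbCA.
Qed.

Definition sig (w : word) (j : nat) := (sact w (j, false)).2.

Lemma sact_cat2 u v p : sact (u ++ v) p = sact u (sact v p).
Proof. exact: sact_cat. Qed.


Lemma invG n j w : 1 <= j <= n -> weq n (gm j :: gm j :: w) w.
Proof. by move=> H; have := relT w (r_inv_g H). Qed.

Lemma invR n i w : 1 <= i <= n - 1 -> weq n (rh i :: rh i :: w) w.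
Proof. by move=> H; have := relT w (r_inv_r H). Qed.

Lemma flipG n j f w : 1 <= j <= n -> weq n ((Gam j, f) :: w) (gm j :: w).
Proof.
case: f => // H.
rewrite -{1}(invG w H).
by have := freeT n (Gam j) true (gm j :: w).
Qed.

Lemma flipR n i f w : 1 <= i <= n - 1 -> weq n ((Rho i, f) :: w) (rh i :: w).
Proof.
case: f => // H.
rewrite -{1}(invR w H).
by have := freeT n (Rho i) true (rh i :: w).
Qed.

Lemma commG n i j w : 1 <= i <= n -> 1 <= j <= n ->
  weq n (gm i :: gm j :: w) (gm j :: gm i :: w).
Proof. by move=> Hi Hj; have := relT w (r_comm_g Hi Hj). Qed.

Definition gw n (a : word) :=
  all (fun l => if l.1 is Gam j then (1 <= j <= n) else false) a.

Lemma gamma_wordE n a : gamma_word n a <-> gw n a.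
Proof.
rewrite /gamma_word /valid /gw; elim: a => [|[[i|i|j] f] a IH] /=.
- by [].
- by split => [[]|].
- by split => [[]|].
- split.
  + move=> [/andP [Hj H1] H2]; rewrite Hj /=; apply/IH; split => //.
  + move=> /andP [Hj H]; move/IH: H => [H1 H2]; rewrite Hj H1 H2 //.
Qed.

Lemma gcomm n a j w : gw n a -> 1 <= j <= n ->
  weq n (gm j :: a ++ w) (a ++ gm j :: w).
Proof.
move=> Ha Hj; elim: a Ha => //= [[[i|i|k] f]] a IH //= /andP [Hk Ha].
rewrite flipG // commG // IH //.
by rewrite -flipG.
Qed.

Definition blk (s : nat -> bool) j : word := if s j then [:: gm j] else [::].
Definition nfl s (l : seq nat) : word := flatten (map (blk s) l).
Definition NF n s := nfl s (iota 1 n).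

Lemma nfl_cat s l1 l2 : nfl s (l1 ++ l2) = nfl s l1 ++ nfl s l2.
Proof. by rewrite /nfl map_cat flatten_cat. Qed.

Lemma nfl_cons s x l : nfl s (x :: l) = blk s x ++ nfl s l.
Proof. by []. Qed.

Lemma gw_nfl n s l : all (fun j => 1 <= j <= n) l -> gw n (nfl s l).
Proof.
elim: l => //= x l IH /andP [Hx Hl].
rewrite /gw all_cat; apply/andP; split; last exact: IH.
by rewrite /blk; case: (s x) => //=; rewrite Hx.
Qed.

Lemma gw_NF n s : gw n (NF n s).
Proof.
apply: gw_nfl; apply/allP => j; rewrite mem_iota; lia.
Qed.

Lemma nfl_ext s1 s2 l : {in l, s1 =1 s2} -> nfl s1 l = nfl s2 l.
Proof.
move=> H; rewrite /nfl; congr flatten; apply/eq_in_map => j Hj.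
by rewrite /blk H.
Qed.

Lemma NF_ext n s1 s2 : (forall j, 1 <= j <= n -> s1 j = s2 j) -> NF n s1 = NF n s2.
Proof.
move=> H; apply: nfl_ext => j; rewrite mem_iota => Hj; apply: H; lia.
Qed.

Lemma iota_split n i : 1 <= i <= n ->
  iota 1 n = iota 1 i.-1 ++ i :: iota i.+1 (n - i).
Proof.
move=> H.
have E : n = i.-1 + (n - i).+1 by lia.
rewrite {1}E iotaD /=. have -> : 1 + i.-1 = i by lia. by [].
Qed.

Lemma NF_cons n s i w : 1 <= i <= n ->
  weq n (gm i :: NF n s ++ w) (NF n (fun j => (j == i) (+) s j) ++ w).
Proof.
move=> Hi; rewrite /NF (iota_split Hi) !nfl_cat !nfl_cons -!catA.
have EA : nfl (fun j => (j == i) (+) s j) (iota 1 i.-1) = nfl s (iota 1 i.-1).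
  apply: nfl_ext => j; rewrite mem_iota => Hj /=.
  have -> : (j == i) = false by apply/eqP; lia. by [].
have EC : nfl (fun j => (j == i) (+) s j) (iota i.+1 (n - i)) =
          nfl s (iota i.+1 (n - i)).
  apply: nfl_ext => j; rewrite mem_iota => Hj /=.
  have -> : (j == i) = false by apply/eqP; lia. by [].
rewrite EA EC gcomm //; last first.
  apply: gw_nfl; apply/allP => j; rewrite mem_iota; lia.
rewrite /blk eqxx /=; case: (s i) => //=.
by rewrite invG.
Qed.

Definition allG (a : word) := all (fun l => if l.1 is Gam _ then true else false) a.

Lemma gw_allG n a : gw n a -> allG a.
Proof. by elim: a => //= [[[i|i|j] f]] a IH //= /andP [_ /IH]. Qed.

Lemma sact_allG a k b : allG a -> (sact a (k, b)).1 = k.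
Proof.
by elim: a => //= [[[i|i|j] f]] a IH //= H; rewrite /fl /= IH.
Qed.

Lemma sig_consG a i f j : allG a ->
  sig ((Gam i, f) :: a) j = (j == i) (+) sig a j.
Proof.
move=> H; rewrite /sig /= /fl /=.
by rewrite (sact_allG _ _ H).
Qed.

Lemma NF_eq n a : gw n a -> weq n a (NF n (sig a)).
Proof.
elim: a => [|[[i|i|k] f] a IH] //=.
- by rewrite /NF /nfl /sig /=; elim: (iota 1 n).
- move=> /andP [Hk Ha].
  apply: weq_trans (_ : weq n (gm k :: a) _); first exact: flipG.
  apply: weq_trans (_ : weq n (gm k :: NF n (sig a)) _).
    by have := weq_ctx [:: gm k] [::] (IH Ha); rewrite !cats0.
  have := NF_cons (sig a) [::] Hk. rewrite !cats0 => ->.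
  rewrite (@NF_ext n _ (sig ((Gam k, f) :: a))) // => j _.
  by rewrite sig_consG // (gw_allG Ha).
Qed.

Lemma sig_catG u v j : allG v -> sig (u ++ v) j = sig v j (+) sig u j.
Proof.
move=> Hv; rewrite /sig sact_cat.
have := sact_allG j false Hv.
case: (sact v (j, false)) => x y /= ->.
by rewrite sact_split /=.
Qed.

Lemma allG_nfl s l : allG (nfl s l).
Proof.
elim: l => //= x l IH. rewrite /allG all_cat; apply/andP; split => //.
by rewrite /blk; case: (s x).
Qed.

Lemma sig_nfl s l j : uniq l -> sig (nfl s l) j = (j \in l) && s j.
Proof.
elim: l => [|x l IH] //= /andP [Hx Hu].
rewrite nfl_cons sig_catG ?allG_nfl // IH // in_cons.
rewrite /blk; case: (eqVneq j x) => [->|ne] /=.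
  rewrite (negbTE Hx) /=; case: (s x) => //=.
  by rewrite /sig /= /fl /= eqxx.
case: (s x) => /=; last by rewrite /sig /= addbF.
by rewrite /sig /= /fl /= (negbTE ne) !addbF.
Qed.

Lemma sig_NF n s j : 1 <= j <= n -> sig (NF n s) j = s j.
Proof.
move=> H; rewrite /NF sig_nfl ?iota_uniq // mem_iota.
have -> : (1 <= j < 1 + n) = true by apply/idP; lia. by [].
Qed.

Lemma G1 n a b : gw n a -> gw n b ->
  (forall j, 1 <= j <= n -> sig a j = sig b j) -> weq n a b.
Proof.
move=> Ha Hb H. rewrite (NF_eq Ha) (NF_eq Hb) (NF_ext H). by [].
Qed.

Lemma gw_cat n a b : gw n (a ++ b) = gw n a && gw n b.
Proof. by rewrite /gw all_cat. Qed.

Lemma allG_cat a b : allG (a ++ b) = allG a && allG b.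
Proof. by rewrite /allG all_cat. Qed.

Lemma NF_add n s1 s2 :
  weq n (NF n s1 ++ NF n s2) (NF n (fun j => s1 j (+) s2 j)).
Proof.
apply: G1; rewrite ?gw_cat ?gw_NF //.
move=> j Hj; rewrite sig_catG ?allG_nfl // !sig_NF //.
by rewrite addbC.
Qed.

Lemma NF0 n : NF n (fun _ => false) = [::].
Proof. by rewrite /NF /nfl /blk; elim: (iota 1 n). Qed.


Definition rwb m (c : word) :=
  all (fun l => if l.1 is Rho i then (1 <= i <= m) else false) c.

Lemma rwb_cat m a b : rwb m (a ++ b) = rwb m a && rwb m b.
Proof. by rewrite /rwb all_cat. Qed.

Lemma rwb_rev m a : rwb m (rev a) = rwb m a.
Proof. by rewrite /rwb all_rev. Qed.

Lemma rwb_valid n c : rwb (n - 1) c -> valid n c.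
Proof. by elim: c => //= [[[i|i|j] f]] c IH //= /andP [-> /IH]. Qed.

Lemma rwb_allG_nil c : rwb 0 c -> c = [::].
Proof. case: c => //= [[[i|i|j] f]] c //=. case/andP. lia. Qed.

Lemma act_cat u v k : act (u ++ v) k = act u (act v k).
Proof. by rewrite /act foldr_cat. Qed.

Lemma act_rev_l w k : act (rev w) (act w k) = k.
Proof.
by rewrite (act_sact w k false) (act_sact (rev w) _ (sact w (k, false)).2) -surjective_pairing sact_rev_l.
Qed.

Lemma act_rev_r w k : act w (act (rev w) k) = k.
Proof. by have := act_rev_l (rev w) k; rewrite revK. Qed.

Lemma act_inj w x y : act w x = act w y -> x = y.
Proof. by move=> H; rewrite -(act_rev_l w x) H act_rev_l. Qed.

Lemma swap_range n i j : 1 <= i <= n - 1 -> 1 <= j <= n -> 1 <= swap i j <= n.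
Proof. rewrite /swap; eqcases; lia. Qed.

Lemma act_range n w k : valid n w -> 1 <= k <= n -> 1 <= act w k <= n.
Proof.
elim: w => //= [[[i|i|j] f]] w IH //= /andP [Hg Hw] Hk; try exact: IH.
by apply: swap_range => //; apply: IH.
Qed.

Lemma valid_rev n w : valid n (rev w) = valid n w.
Proof. by rewrite /valid all_rev. Qed.

Lemma valid_cat n a b : valid n (a ++ b) = valid n a && valid n b.
Proof. by rewrite /valid all_cat. Qed.

Lemma valid_winv n w : valid n (winv w) = valid n w.
Proof. by rewrite /valid /winv all_rev all_map. Qed.

Lemma RG n i j w : 1 <= i <= n - 1 -> 1 <= j <= n ->
  weq n (rh i :: gm j :: w) (gm (swap i j) :: rh i :: w).
Proof.
move=> Hi Hj.
case: (eqVneq j i) => [->|ne1].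
  rewrite /swap eqxx. by have := relT w (r_rg Hi).
case: (eqVneq j i.+1) => [->|ne2].
  rewrite /swap eqxx (_ : (i.+1 == i) = false); last by apply/eqP; lia.
  rewrite -[X in weq _ _ X](invR (gm i :: rh i :: w) Hi).
  have := relT (rh i :: w) (r_rg Hi). rewrite /= => ->.
  by rewrite invR.
rewrite /swap (negbTE ne1) (negbTE ne2).
by have := relT w (r_comm_gr Hi Hj ne1 ne2); symmetry.
Qed.

Lemma GR n i j w : 1 <= i <= n - 1 -> 1 <= j <= n ->
  weq n (gm j :: rh i :: w) (rh i :: gm (swap i j) :: w).
Proof.
move=> Hi Hj.
by rewrite (RG w Hi (swap_range Hi Hj)) swapK.
Qed.

Lemma MOVEG n c j w : rwb (n - 1) c -> 1 <= j <= n ->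
  weq n (c ++ gm j :: w) (gm (act c j) :: c ++ w).
Proof.
move=> Hc Hj; elim: c Hc => //= [[[i|i|k] f]] c IH //= /andP [Hi Hc].
rewrite flipR // IH // RG //; last first.
  by apply: act_range => //; apply: rwb_valid.
by rewrite flipR.
Qed.

Lemma MOVEG' n c j w : rwb (n - 1) c -> 1 <= j <= n ->
  weq n (gm j :: c ++ w) (c ++ gm (act (rev c) j) :: w).
Proof.
move=> Hc Hj.
rewrite MOVEG //; last by apply: act_range => //; rewrite valid_rev; apply: rwb_valid.
by rewrite act_rev_r.
Qed.

Lemma RRc n i j w : 1 <= i <= n - 1 -> 1 <= j <= n - 1 -> far i j ->
  weq n (rh i :: rh j :: w) (rh j :: rh i :: w).
Proof. by move=> Hi Hj Hf; have := relT w (r_comm_r Hi Hj Hf). Qed.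

Lemma SRc n i j w : 1 <= i <= n - 1 -> 1 <= j <= n - 1 -> far i j ->
  weq n (sg i :: rh j :: w) (rh j :: sg i :: w).
Proof. by move=> Hi Hj Hf; have := relT w (r_comm_sr Hi Hj Hf). Qed.

Lemma RRbraid n i w : 1 <= i -> i <= n - 2 ->
  weq n (rh i :: rh i.+1 :: rh i :: w) (rh i.+1 :: rh i :: rh i.+1 :: w).
Proof. by move=> H1 H2; have := relT w (r_braid_r H1 H2). Qed.

Lemma MIX n i w : 1 <= i -> i <= n - 2 ->
  weq n (rh i :: rh i.+1 :: sg i :: w) (sg i.+1 :: rh i :: rh i.+1 :: w).
Proof. by move=> H1 H2; have := relT w (r_mixed H1 H2). Qed.

Lemma RSR n i w : 1 <= i <= n - 1 ->
  weq n (rh i :: sg i :: rh i :: w) (gm i.+1 :: gm i :: sg i :: gm i :: gm i.+1 :: w).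
Proof. by move=> H; have := relT w (r_rsr H). Qed.

Lemma GSc n i j w : 1 <= i <= n - 1 -> 1 <= j <= n -> j != i -> j != i.+1 ->
  weq n (gm j :: sg i :: w) (sg i :: gm j :: w).
Proof. by move=> H1 H2 H3 H4; have := relT w (r_comm_gs H1 H2 H3 H4). Qed.

Definition farl i (c : word) :=
  all (fun l => if l.1 is Rho j then far i j else false) c.

Lemma comm_R n i c w : 1 <= i <= n - 1 -> rwb (n - 1) c -> farl i c ->
  weq n (rh i :: c ++ w) (c ++ rh i :: w).
Proof.
move=> Hi; elim: c => //= [[[j|j|j] f]] c IH //= /andP [Hj Hc] /andP [Hf Hl].
rewrite flipR // RRc // IH //.
by rewrite flipR.
Qed.

Lemma comm_S n i c w : 1 <= i <= n - 1 -> rwb (n - 1) c -> farl i c ->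
  weq n (sg i :: c ++ w) (c ++ sg i :: w).
Proof.
move=> Hi; elim: c => //= [[[j|j|j] f]] c IH //= /andP [Hj Hc] /andP [Hf Hl].
rewrite flipR // SRc // IH //.
by rewrite flipR.
Qed.

Lemma farl_rev i c : farl i (rev c) = farl i c.
Proof. by rewrite /farl all_rev. Qed.

Lemma farl_cat i a b : farl i (a ++ b) = farl i a && farl i b.
Proof. by rewrite /farl all_cat. Qed.

Definition drange a b : word := map rh (rev (iota a (b - a))).

Lemma rhos_drange i j : rhos i j = drange i.+1 j.
Proof. rewrite /rhos /drange; congr (map _ (rev (iota _ _))); lia. Qed.

Lemma xw_lt i j : i < j -> xw i j = drange i.+1 j ++ sg i :: rev (drange i.+1 j).
Proof. by move=> H; rewrite /xw H rhos_drange. Qed.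

Lemma xw_gt i j : j < i ->
  xw i j = drange j.+1 i ++ rh j :: sg j :: rh j :: rev (drange j.+1 i).
Proof.
move=> H; rewrite /xw (_ : (i < j) = false); last by apply/negbTE; rewrite -leqNgt ltnW.
by rewrite rhos_drange.
Qed.

Lemma drange_nil a b : b <= a -> drange a b = [::].
Proof. by move=> H; rewrite /drange (_ : b - a = 0) //; lia. Qed.

Lemma drange_S a b : a <= b -> drange a b.+1 = rh b :: drange a b.
Proof.
move=> H; rewrite /drange (_ : b.+1 - a = (b - a) + 1); last by lia.
rewrite iotaD rev_cat /= (_ : a + (b - a) = b) //; lia.
Qed.

Lemma drange_low a b : a < b -> drange a b = drange a.+1 b ++ [:: rh a].
Proof.
move=> H; rewrite /drange (_ : b - a = (b - a.+1).+1); last by lia.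
by rewrite /= rev_cons map_rcons cats1.
Qed.

Lemma drange_split a b c : a <= b -> b <= c ->
  drange a c = drange b c ++ drange a b.
Proof.
move=> H1 H2; rewrite /drange (_ : c - a = (b - a) + (c - b)); last by lia.
rewrite iotaD rev_cat map_cat (_ : a + (b - a) = b) //; lia.
Qed.

Lemma all_drange (P : letter -> bool) a b :
  (forall j, a <= j < b -> P (rh j)) -> all P (drange a b).
Proof.
move=> H; rewrite /drange all_map all_rev; apply/allP => j.
rewrite mem_iota => Hj /=; apply: H; lia.
Qed.

Lemma rwb_drange m a b : 1 <= a -> b <= m.+1 -> rwb m (drange a b).
Proof. move=> H1 H2; apply: all_drange => j Hj /=; lia. Qed.

Lemma farl_drange i a b : (forall j, a <= j < b -> far i j) -> farl i (drange a b).
Proof. by move=> H; apply: all_drange. Qed.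

Lemma act_drange_a a b : a <= b -> act (drange a b) a = b.
Proof.
elim: b => [|b IH] H; first by have -> : a = 0 by lia.
case: (eqVneq a b.+1) => [<-|ne]; first by rewrite drange_nil.
rewrite drange_S /=; last by lia.
rewrite IH; last by lia.
by rewrite /swap eqxx.
Qed.

Lemma act_drange_fix a b k : (k < a) || (b < k) -> act (drange a b) k = k.
Proof.
elim: b => [|b IH] H; first by rewrite drange_nil //; lia.
case: (leqP b.+1 a) => Hab; first by rewrite drange_nil.
rewrite drange_S /=; last by lia.
rewrite IH; last by lia.
rewrite /swap; eqcases; lia.
Qed.

Lemma act_rwb_fix m u k : rwb m u -> m.+1 < k -> act u k = k.
Proof.
elim: u => //= [[[i|i|j] f]] u IH //= /andP [Hi Hu] Hk.
rewrite IH // /swap; eqcases; lia.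
Qed.


(* ---------- F. Coxeter presentation of S_n ---------- *)
Lemma DEC n m u : 1 <= m -> m.+1 <= n -> rwb m u ->
  exists u' k, [/\ rwb m.-1 u', 1 <= k <= m.+1 & weq n u (u' ++ drange k m.+1)].
Proof.
move=> Hm Hmn; elim/last_ind: u => [|u0 l IH].
  move=> _; exists [::], m.+1; split => //; first by lia. by rewrite drange_nil.
rewrite -cats1 rwb_cat => /andP [Hu0 Hl].
have [u' [k [Hu' Hk E]]] := IH Hu0.
case: l Hl => [[i|i|j] f] //= /andP [Hi _].
have Hin : 1 <= i <= n - 1 by lia.
have E1 : weq n (u0 ++ [:: (Rho i, f)]) (u' ++ drange k m.+1 ++ [:: rh i]).
  by rewrite E flipR // catA.
case: (ltnP i.+1 k) => Hik.
  exists (u' ++ [:: rh i]), k; split => //.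
    by rewrite rwb_cat Hu' /=; apply/andP; split => //; lia.
  rewrite E1 -comm_R //.
  - by rewrite -catA /= ?cats0.
  - by apply: rwb_drange; lia.
  - apply: farl_drange => j Hj; rewrite /far; apply/orP; left; lia.
case: (eqVneq i.+1 k) => [Ek|nek].
  exists u', i; split => //; first by lia.
  by rewrite E1 -Ek -drange_low //; lia.
case: (eqVneq i k) => [Ek|nek2].
  exists u', k.+1; split => //; first by lia.
  rewrite E1 (drange_low (a := k)); last by lia.
  by rewrite -Ek -!catA /= invR ?cats0.
have Hki : k < i by lia.
case: i Hi Hin Hki E1 {Hik nek nek2} => [|j] Hi Hin Hki E1; first by lia.
exists (u' ++ [:: rh j]), k; split => //.
  by rewrite rwb_cat Hu' /=; apply/andP; split => //; lia.
rewrite E1 (drange_split (b := j.+2)); try lia.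
rewrite (drange_S (a := k) (b := j.+1)); last by lia.
rewrite (drange_S (a := k) (b := j)); last by lia.
have Hj : 1 <= j <= n - 1 by lia.
have C1 : weq n (drange k j ++ [:: rh j.+1]) (rh j.+1 :: drange k j ++ [::]).
  symmetry; apply: comm_R => //.
  - by apply: rwb_drange; lia.
  - apply: farl_drange => x Hx; rewrite /far; apply/orP; right; lia.
rewrite -!catA /= C1 cats0 -RRbraid; try lia.
rewrite -(comm_R (i := j) (c := drange j.+2 m.+1)) //.
- by apply: rwb_drange; lia.
- apply: farl_drange => x Hx; rewrite /far; apply/orP; left; lia.
Qed.

Lemma COX n m : m <= n -> forall u v, rwb m.-1 u -> rwb m.-1 v ->
  (forall x, 1 <= x <= m -> act u x = act v x) -> weq n u v.
Proof.
elim: m => [|m IH] Hmn u v Hu Hv H.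
  by rewrite (rwb_allG_nil Hu) (rwb_allG_nil Hv).
case: (posnP m) => [m0|mpos].
  by move: Hu Hv; rewrite m0 /= => Hu Hv; rewrite (rwb_allG_nil Hu) (rwb_allG_nil Hv).
have [u' [ku [Hu' Hku Eu]]] := DEC mpos Hmn Hu.
have [v' [kv [Hv' Hkv Ev]]] := DEC mpos Hmn Hv.
have Au : forall x, act u x = act u' (act (drange ku m.+1) x).
  by move=> x; rewrite (weq_act Eu) act_cat.
have Av : forall x, act v x = act v' (act (drange kv m.+1) x).
  by move=> x; rewrite (weq_act Ev) act_cat.
have Fu : act u ku = m.+1.
  rewrite Au act_drange_a; last by lia.
  apply: act_rwb_fix Hu' _; lia.
have Fv : act v kv = m.+1.
  rewrite Av act_drange_a; last by lia.
  apply: act_rwb_fix Hv' _; lia.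
have Ek : ku = kv.
  apply: (act_inj (w := u)); rewrite Fu H // Fv //.
subst kv.
set d := drange ku m.+1.
have Vd : valid m.+1 (rev d).
  rewrite valid_rev; apply: rwb_valid; rewrite subn1 /=.
  by apply: rwb_drange; lia.
rewrite Eu Ev; apply: cat_mor_Proper => //.
apply: IH => //; first by lia.
move=> x Hx.
have := H (act (rev d) x) (act_range Vd (_ : 1 <= x <= m.+1)).
rewrite Au Av act_rev_r => -> //. lia.
Qed.


Lemma swap_l i : swap i i = i.+1.
Proof. by rewrite /swap eqxx. Qed.

Lemma swap_r i : swap i i.+1 = i.
Proof. rewrite /swap; eqcases; lia. Qed.

Lemma swap_fix i k : k != i -> k != i.+1 -> swap i k = k.
Proof. by move=> H1 H2; rewrite /swap (negbTE H1) (negbTE H2). Qed.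

Lemma rwb_dr n a b : 1 <= a -> b <= n -> rwb (n - 1) (drange a b).
Proof. move=> H1 H2; apply: rwb_drange => //; lia. Qed.

Lemma rwb_rdr n a b : 1 <= a -> b <= n -> rwb (n - 1) (rev (drange a b)).
Proof. by move=> H1 H2; rewrite rwb_rev; apply: rwb_dr. Qed.

Lemma farD i a b : (forall j, a <= j < b -> (i.+2 <= j) || (j.+2 <= i)) ->
  farl i (drange a b).
Proof. by move=> H; apply: farl_drange. Qed.

Lemma farRD i a b : (forall j, a <= j < b -> (i.+2 <= j) || (j.+2 <= i)) ->
  farl i (rev (drange a b)).
Proof. by move=> H; rewrite farl_rev; apply: farl_drange. Qed.

Ltac farsolve := let j := fresh in let Hj := fresh in
  first [apply: farD | apply: farRD]; move=> j Hj; apply/orP; lia.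

Lemma SHIFT n c k b w : 1 <= c <= k -> k.+2 <= b <= n ->
  weq n (rh k :: drange c b ++ w) (drange c b ++ rh k.+1 :: w).
Proof.
move=> H1 H2.
rewrite (drange_split (b := k.+2)); try lia.
rewrite (drange_S (a := c) (b := k.+1)); last by lia.
rewrite (drange_S (a := c) (b := k)); last by lia.
rewrite -catA (comm_R (i := k)); first last; try lia.
- farsolve.
- by apply: rwb_dr; lia.
rewrite /= RRbraid; try lia.
rewrite (comm_R (i := k.+1) (c := drange c k)); first last; try lia.
- farsolve.
- by apply: rwb_dr; lia.
by rewrite -catA.
Qed.

Lemma SHIFT' n c k b w : 1 <= c <= k -> k.+2 <= b <= n ->
  weq n (rh k.+1 :: rev (drange c b) ++ w) (rev (drange c b) ++ rh k :: w).
Proof.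
move=> H1 H2.
rewrite (drange_split (b := k.+2)); try lia.
rewrite (drange_S (a := c) (b := k.+1)); last by lia.
rewrite (drange_S (a := c) (b := k)); last by lia.
rewrite rev_cat !rev_cons -!cats1 -!catA /=.
rewrite (comm_R (i := k.+1)); first last; try lia.
- farsolve.
- by apply: rwb_rdr; lia.
rewrite -RRbraid; try lia.
rewrite (comm_R (i := k) (c := rev (drange k.+2 b))); first last; try lia.
- farsolve.
- by apply: rwb_rdr; lia.
by [].
Qed.

Lemma MIX1 n i w : 1 <= i -> i <= n - 2 ->
  weq n (rh i :: sg i.+1 :: rh i :: w) (rh i.+1 :: sg i :: rh i.+1 :: w).
Proof.
move=> H1 H2.
rewrite -[X in weq _ _ X](invR (rh i.+1 :: sg i :: rh i.+1 :: w) (_ : 1 <= i <= n - 1)); last by lia.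
rewrite MIX // invR //. lia.
Qed.

Lemma K_lt n a b k w : a < b -> 1 <= a -> b <= n -> 1 <= k <= n - 1 ->
  weq n (rh k :: xw a b ++ rh k :: w) (xw (swap k a) (swap k b) ++ w).
Proof.
move=> Hab Ha Hb Hk.
have RR : rwb (n - 1) (drange a.+1 b) by apply: rwb_dr.
have RR' : rwb (n - 1) (rev (drange a.+1 b)) by apply: rwb_rdr.
case: (boolP ((k.+2 <= a) || (b.+1 <= k))) => Hfar.
  move/orP: (Hfar) => Hf.
  rewrite !swap_fix; try (apply/eqP; lia).
  rewrite xw_lt // -!catA /= comm_R //; last by farsolve.
  rewrite -SRc; try lia; last by rewrite /far; apply/orP; lia.
  rewrite comm_R //; last by farsolve.
  by rewrite invR.
move: Hfar; rewrite negb_or -!ltnNge => /andP [Hf1 Hf2].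
case: (eqVneq k a.-1) => [Eka|nka].
  have Ea : a = k.+1 by lia.
  subst a.
  rewrite swap_r swap_fix; try (apply/eqP; lia).
  rewrite !xw_lt //; try lia.
  rewrite (drange_low (a := k.+1)) //.
  rewrite -!catA /= comm_R //; try lia; last by farsolve.
  rewrite -(comm_R (i := k) (c := rev (drange k.+2 b))) //; try lia; try farsolve.
  rewrite MIX1; try lia.
  by rewrite rev_cat.
case: (eqVneq k a) => [->|nka2].
  rewrite swap_l.
  case: (eqVneq b a.+1) => [->|nb].
    rewrite swap_r xw_lt // xw_gt // drange_nil //.
  rewrite swap_fix; try (apply/eqP; lia).
  rewrite !xw_lt //; try lia.
  rewrite (drange_low (a := a.+1)); last by lia.
  rewrite rev_cat -!catA /=.
  have R2 : rwb (n - 1) (drange a.+2 b) by apply: rwb_dr; lia.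
  have R2' : rwb (n - 1) (rev (drange a.+2 b)) by apply: rwb_rdr; lia.
  rewrite comm_R //; try lia; try farsolve.
  rewrite -(comm_R (i := a) (c := rev (drange a.+2 b))) //; try lia; try farsolve.
  rewrite MIX; try lia.
  rewrite (invR (i := a.+1)); last by lia.
  by rewrite invR //; lia.
case: (boolP ((a.+1 <= k) && (k.+2 <= b))) => Hmid.
  move/andP: (Hmid) => [Hm1 Hm2].
  rewrite !swap_fix; try (apply/eqP; lia).
  rewrite xw_lt // -!catA /= SHIFT; try lia.
  rewrite -SRc; try lia; last by rewrite /far; apply/orP; lia.
  by rewrite SHIFT' ?invR //; lia.
move: Hmid; rewrite negb_and -!ltnNge => Hmid'.
have {Hmid'} Hmid : k <= a \/ b <= k.+1 by case/orP: Hmid'; [left|right]; lia.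
case: (eqVneq k b.-1) => [Ekb|nkb].
  case: b Hab Hb RR RR' Hf1 Hf2 Hmid Ekb nka nka2 => [|c] //= Hab Hb RR RR' Hf1 Hf2 Hmid -> nka nka2.
  rewrite swap_fix; try (apply/eqP; lia).
  rewrite swap_r !xw_lt //; try lia.
  rewrite drange_S; last by lia.
  rewrite rev_cons -cats1 -!catA /= invR; last by lia.
  by rewrite -!catA /= invR //; lia.
have Ekb : k = b by lia.
subst k.
rewrite swap_l swap_fix; try (apply/eqP; lia).
rewrite !xw_lt //; try lia.
rewrite drange_S; last by lia.
by rewrite rev_cons -cats1 -!catA /= -!catA.
Qed.

Lemma XSWAP n a b w : b < a -> 1 <= b -> a <= n ->
  weq n (xw a b ++ w) (gm a :: gm b :: xw b a ++ gm b :: gm a :: w).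
Proof.
move=> Hab Hb Ha.
have RR : rwb (n - 1) (drange b.+1 a) by apply: rwb_dr.
have RR' : rwb (n - 1) (rev (drange b.+1 a)) by apply: rwb_rdr.
rewrite xw_gt // xw_lt // -!catA /= RSR; last by lia.
rewrite (MOVEG (c := drange b.+1 a) (j := b.+1)) //; last by lia.
rewrite act_drange_a //.
rewrite (MOVEG (c := drange b.+1 a) (j := b)) //; last by lia.
rewrite act_drange_fix; last by apply/orP; left.
rewrite (MOVEG' (c := rev (drange b.+1 a)) (j := b.+1)) //; last by lia.
rewrite revK act_drange_a //.
rewrite (MOVEG' (c := rev (drange b.+1 a)) (j := b)) //; last by lia.
rewrite revK act_drange_fix; last by apply/orP; left.
by [].
Qed.

Lemma K n a b k w : a != b -> 1 <= a <= n -> 1 <= b <= n -> 1 <= k <= n - 1 ->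
  weq n (rh k :: xw a b ++ rh k :: w) (xw (swap k a) (swap k b) ++ w).
Proof.
move=> nab Ha Hb Hk.
case: (ltngtP a b) => Hab; last by rewrite Hab eqxx in nab.
  by apply: K_lt => //; lia.
have Ha' := swap_range Hk Ha.
have Hb' := swap_range Hk Hb.
rewrite (XSWAP (rh k :: w)) //; try lia.
rewrite (RG _ Hk Ha) (RG _ Hk Hb).
rewrite (GR _ Hk Ha) (GR _ Hk Hb).
rewrite K_lt //; try lia.
have nab' : swap k a != swap k b.
  apply/eqP => E; have := f_equal (swap k) E; rewrite !swapK => E'; lia.
case: (ltngtP (swap k a) (swap k b)) => H'; last by rewrite H' eqxx in nab'.
  rewrite (XSWAP (gm (swap k b) :: gm (swap k a) :: w) H'); try lia.
  rewrite invG; last by lia.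
  rewrite invG; last by lia.
  rewrite invG; last by lia.
  by rewrite invG //; lia.
by rewrite (XSWAP w H'); try lia.
Qed.

Lemma CONJ n c i w : rwb (n - 1) c -> 1 <= i <= n - 1 ->
  weq n (c ++ sg i :: winv c ++ w) (xw (act c i) (act c i.+1) ++ w).
Proof.
move=> Hc Hi; elim: c Hc w => [|[[j|j|j] f] c IH] //= Hc w.
  by rewrite xw_lt // drange_nil.
move/andP: Hc => [Hj Hc].
rewrite winv_cons -!catA /= flipR // flipR //.
rewrite IH //.
have Vc : valid n c by apply: rwb_valid.
apply: K => //; try lia.
- by apply/eqP => /act_inj; lia.
- by apply: act_range => //; lia.
- by apply: act_range => //; lia.
Qed.


Add Parametric Morphism n : winv with signature
  weq n ==> weq n as winv_mor.
Proof. exact: weq_winv. Qed.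

Definition Gen n := gen_by n (hl_gen n).

Lemma Gen_nil n : Gen n [::].
Proof. by exists [::]; split. Qed.

Lemma Gen_cat n u v : Gen n u -> Gen n v -> Gen n (u ++ v).
Proof.
move=> [ws1 [H1 E1]] [ws2 [H2 E2]]; exists (ws1 ++ ws2); split.
  by move=> p /List.in_app_iff [/H1|/H2].
by rewrite map_cat flatten_cat E1 E2.
Qed.

Lemma Gen_weq n u v : Gen n u -> weq n u v -> Gen n v.
Proof.
move=> [ws [H1 E1]] E; exists ws; split => //.
by rewrite -E.
Qed.

Lemma Gen_gen n y : hl_gen n y -> Gen n y.
Proof.
move=> H; exists [:: (false, y)]; split; first by move=> p [<-|].
by rewrite /= cats0.
Qed.

Lemma Gen_winv n u : Gen n u -> Gen n (winv u).
Proof.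
move=> [ws [H1 E1]].
suff [ws' [H2 E2]] : exists ws', (forall p, List.In p ws' -> hl_gen n p.2) /\
  flatten [seq (if p.1 then winv p.2 else p.2) | p <- ws'] =
  winv (flatten [seq (if p.1 then winv p.2 else p.2) | p <- ws]).
  by exists ws'; split => //; rewrite E2; apply: weq_winv.
elim: ws H1 {E1} => [|p ws IH] H1; first by exists [::].
have [ws' [H2 E2]] := IH (fun q Hq => H1 q (or_intror Hq)).
exists (ws' ++ [:: (~~ p.1, p.2)]); split.
  move=> q /List.in_app_iff [/H2 //|[<-|//]]; exact: (H1 p (or_introl erefl)).
rewrite map_cat flatten_cat E2 /= winv_cat cats0.
by case: p {H1} => [[] y] /=; rewrite ?winvK.
Qed.

Definition Cm n k (Y : word) := forall w, weq n (gm k :: Y ++ w) (Y ++ gm k :: w).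

Lemma Cm_cat n k a b : Cm n k a -> Cm n k b -> Cm n k (a ++ b).
Proof. by move=> Ha Hb w; rewrite -catA Ha Hb catA. Qed.

Lemma Cm_gw n k a : 1 <= k <= n -> gw n a -> Cm n k a.
Proof. by move=> Hk Ha w; apply: gcomm. Qed.

Lemma gw_winv n a : gw n (winv a) = gw n a.
Proof. by rewrite /gw /winv all_rev all_map. Qed.

Lemma GC1 n i j k : i < j -> 1 <= i -> j <= n -> 1 <= k <= n -> k != i -> k != j ->
  Cm n k (xw i j).
Proof.
move=> Hij Hi Hj Hk ki kj w.
have RR : rwb (n - 1) (drange i.+1 j) by apply: rwb_dr.
have RR' : rwb (n - 1) (rev (drange i.+1 j)) by apply: rwb_rdr.
rewrite xw_lt // -!catA /= MOVEG' //.
set k' := act (rev (drange i.+1 j)) k.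
have Hk' : 1 <= k' <= n.
  by apply: act_range => //; apply: rwb_valid.
have Ek : act (drange i.+1 j) k' = k by rewrite act_rev_r.
have k'i : k' != i.
  apply/eqP => E; move: Ek; rewrite E act_drange_fix; last by apply/orP; left.
  by move=> E'; rewrite E' eqxx in ki.
have k'i1 : k' != i.+1.
  apply/eqP => E; move: Ek; rewrite E act_drange_a // => E'.
  by rewrite E' eqxx in kj.
rewrite GSc //; try lia.
rewrite MOVEG' // revK Ek.
by rewrite -?catA.
Qed.

Definition avoid i j (h : word) :=
  all (fun l => if l.1 is Gam k then (k != i) && (k != j) else false) h.

Lemma conj_out n i j Y h : gw n h -> avoid i j h ->
  (forall k, 1 <= k <= n -> k != i -> k != j -> Cm n k Y) ->
  weq n (h ++ Y ++ winv h) Y.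
Proof.
move=> Hh Ha HC; elim: h Hh Ha => [|[[x|x|k] f] h IH] //=.
  by rewrite cats0.
move=> /andP [Hk Hh] /andP [/andP [ki kj] Ha].
rewrite winv_cons /=.
have -> : (Gam k, f) :: h ++ Y ++ winv h ++ [:: (Gam k, ~~ f)] =
          (Gam k, f) :: (h ++ Y ++ winv h) ++ [:: (Gam k, ~~ f)] by rewrite !catA.
rewrite IH // flipG // flipG // (HC k) //.
by rewrite invG // cats0.
Qed.

Lemma all_nfl (Q : letter -> bool) (s : nat -> bool) (l : seq nat) :
  (forall k, k \in l -> s k -> Q (gm k)) -> all Q (nfl s l).
Proof.
elim: l => //= x l IH H; rewrite all_cat; apply/andP; split.
  rewrite /blk; case E: (s x) => //=; rewrite andbT; apply: H => //.
  by rewrite in_cons eqxx.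
by apply: IH => k Hk; apply: H; rewrite in_cons Hk orbT.
Qed.

Ltac sigcomp := rewrite /sig /= /fl /=; eqcases; rewrite /= ?addbF; try lia; try done.

Lemma GAMCONJ n g i j : gw n g -> i < j -> 1 <= i -> j <= n ->
  Gen n (g ++ xw i j ++ winv g).
Proof.
move=> Hg Hij Hi Hj.
set s_in := fun k => ((k == i) || (k == j)) && sig g k.
set s_out := fun k => ~~ ((k == i) || (k == j)) && sig g k.
have Eg : weq n g (NF n s_out ++ NF n s_in).
  rewrite NF_add (NF_eq Hg); rewrite (@NF_ext n (sig g) (fun k => s_out k (+) s_in k)) // => k _.
  by rewrite /s_in /s_out; case: (_ || _); case: (sig g k).
set go := NF n s_out.
set gi := NF n s_in.
have Eg' := weq_winv Eg.
rewrite winv_cat in Eg'.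
apply: (@Gen_weq n (gi ++ xw i j ++ winv gi)); last first.
  symmetry; rewrite Eg winv_cat -!catA.
  have -> : go ++ gi ++ xw i j ++ winv gi ++ winv go =
            go ++ (gi ++ xw i j ++ winv gi) ++ winv go by rewrite !catA.
  rewrite (@conj_out n i j) //.
  - exact: gw_NF.
  - rewrite /avoid /go /NF; apply: all_nfl => k _; rewrite /s_out.
    by case/andP; rewrite negb_or.
  - move=> k Hk ki kj; apply: Cm_cat; first by apply: Cm_gw => //; exact: gw_NF.
    apply: Cm_cat; first by apply: (GC1 Hij).
    by apply: Cm_gw => //; rewrite gw_winv; exact: gw_NF.
have Gi : gw n gi by exact: gw_NF.
have Hi' : 1 <= i <= n by lia.
have Hj' : 1 <= j <= n by lia.
have ij : (j == i) = false by apply/eqP; lia.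
have key : forall b', gw n (winv b') ->
    (forall k, 1 <= k <= n -> s_in k = sig (winv b') k) ->
    hl_gen n (winv b' ++ xw i j ++ b') ->
    Gen n (gi ++ xw i j ++ winv gi).
  move=> b' Hb' Hs Hhl.
  apply: (@Gen_weq n (winv b' ++ xw i j ++ b')); first exact: Gen_gen.
  have E : weq n gi (winv b') by apply: G1 => // k Hk; rewrite sig_NF // Hs.
  by rewrite E winvK.
case Ei: (sig g i); case Ej: (sig g j).
- apply: (key [:: gm i; gm j]) => //=; first by rewrite Hi' Hj'.
  + move=> k Hk; rewrite /s_in; case: (eqVneq k i) => [->|ki]; first by rewrite Ei; sigcomp.
    case: (eqVneq k j) => [->|kj]; first by rewrite orbT Ej; sigcomp.
    by rewrite /=; sigcomp.
  + exists i, j; split => //; exact: Or44.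
- apply: (key [:: gm i]) => //=; first by rewrite Hi'.
  + move=> k Hk; rewrite /s_in; case: (eqVneq k i) => [->|ki]; first by rewrite Ei; sigcomp.
    case: (eqVneq k j) => [->|kj]; first by rewrite orbT Ej; sigcomp.
    by rewrite /=; sigcomp.
  + exists i, j; split => //; exact: Or42.
- apply: (key [:: gm j]) => //=; first by rewrite Hj'.
  + move=> k Hk; rewrite /s_in; case: (eqVneq k i) => [->|ki]; first by rewrite Ei; sigcomp.
    case: (eqVneq k j) => [->|kj]; first by rewrite orbT Ej; sigcomp.
    by rewrite /=; sigcomp.
  + exists i, j; split => //; exact: Or43.
- apply: (key [::]) => //=.
  + move=> k Hk; rewrite /s_in; case: (eqVneq k i) => [->|ki]; first by rewrite Ei.
    case: (eqVneq k j) => [->|kj]; first by rewrite orbT Ej.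
    by [].
  + exists i, j; split => //; apply: Or41; by rewrite cats0.
Qed.


(* ---------- I. Schreier rewriting ---------- *)
Lemma KEY n g c i : gw n g -> rwb (n - 1) c -> 1 <= i <= n - 1 ->
  Gen n (g ++ c ++ sg i :: winv c ++ winv g).
Proof.
move=> Hg Hc Hi.
have Vc : valid n c by apply: rwb_valid.
set a := act c i; set b := act c i.+1.
have Ha : 1 <= a <= n by apply: act_range => //; lia.
have Hb : 1 <= b <= n by apply: act_range => //; lia.
have nab : a != b by apply/eqP => /act_inj; lia.
apply: (@Gen_weq n (g ++ xw a b ++ winv g)); last by rewrite CONJ.
case: (ltngtP a b) => Hab; last by rewrite Hab eqxx in nab.
  by apply: GAMCONJ => //; lia.
have Hg' : gw n (g ++ [:: gm a; gm b]) by rewrite gw_cat Hg /= Ha Hb.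
apply: (@Gen_weq n ((g ++ [:: gm a; gm b]) ++ xw b a ++ winv (g ++ [:: gm a; gm b]))).
  by apply: GAMCONJ => //; lia.
rewrite (XSWAP (winv g)) //; try lia.
rewrite winv_cat /= -!catA /= flipG // flipG //.
Qed.

Lemma MAIN n w : valid n w ->
  exists H g c, [/\ Gen n H, gw n g, rwb (n - 1) c & weq n w (H ++ g ++ c)].
Proof.
elim/last_ind: w => [|w0 l IH].
  by move=> _; exists [::], [::], [::]; split => //; exact: Gen_nil.
rewrite -cats1 valid_cat => /andP [V0 Vl].
have [H [g [c [GH Hg Hc E]]]] := IH V0.
case: l Vl => [[i|i|j] f] /= /andP [Hl _].
-
  set Z := g ++ c ++ (Sig i, f) :: winv c ++ winv g.
  exists (H ++ Z), g, c; split => //.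
    apply: Gen_cat => //.
    case: f @Z => Z.
      have -> : Z = winv (g ++ c ++ sg i :: winv c ++ winv g).
        by rewrite /Z !winv_cat winv_cons !winv_cat !winvK /= -!catA.
      by apply: Gen_winv; apply: KEY.
    by apply: KEY.
  by rewrite E /Z -!catA /= -!catA cancelLT cancelL.
-
  exists H, g, (c ++ [:: (Rho i, f)]); split => //.
    by rewrite rwb_cat Hc /=; lia.
  by rewrite E -!catA.
-
  have Hj : 1 <= act c j <= n by apply: act_range => //; apply: rwb_valid.
  exists H, (g ++ [:: gm (act c j)]), c; split => //.
    by rewrite gw_cat Hg /= Hj.
  rewrite E -!catA /= flipG //.
  by rewrite MOVEG // cats0.
Qed.

Definition ftriv (w : word) := forall p, sact w p = p.

Lemma ftriv_xw i j : ftriv (xw i j).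
Proof.
move=> p; rewrite /xw; case: (i < j); rewrite !sact_cat /=.
  by rewrite sact_rev_r.
by rewrite flK sact_rev_r.
Qed.

Lemma ftriv_hl n y : hl_gen n y -> ftriv y.
Proof.
move=> [i [j [_ _ _ H]]] p.
have T : forall b, ftriv (conjw (xw i j) b).
  by move=> b q; rewrite /conjw !sact_cat ftriv_xw sact_winv sact_rev_l.
case: H => ->; first exact: ftriv_xw.
all: exact: T.
Qed.

Lemma Gen_ftriv n w : Gen n w -> ftriv w.
Proof.
move=> [ws [H1 E]] p; rewrite (weq_sact E).
elim: ws H1 {E} => //= q ws IH H1.
rewrite sact_cat IH; last by move=> r Hr; apply: H1; right.
have := ftriv_hl (H1 q (or_introl erefl)).
case: q {H1} => [[] y] /= Hy //.
by rewrite sact_winv -{1}(Hy p) sact_rev_l.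
Qed.


Lemma TVH_sact n w k b : in_TVH n w -> 1 <= k <= n ->
  sact w (k, b) = (k, b (+) sig w k).
Proof.
move=> [_ Hw] Hk; rewrite sact_split; congr pair.
by rewrite -act_sact Hw.
Qed.

Lemma psi_nil n w : weq n (NF n (sig w)) [::] <-> forall j, 1 <= j <= n -> sig w j = false.
Proof.
split.
  move=> E j Hj; rewrite -(sig_NF (sig w) Hj).
  by rewrite /sig (weq_sact E).
move=> H; rewrite (@NF_ext n _ (fun _ => false)) ?NF0 //.
Qed.

Lemma sact_rwb m c k b : rwb m c -> sact c (k, b) = (act c k, b).
Proof.
elim: c => //= [[[i|i|j] f]] c IH //= /andP [_ Hc].
by rewrite /fl /= IH.
Qed.

Lemma sact_gw g k b : allG g -> sact g (k, b) = (k, b (+) sig g k).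
Proof. by move=> Hg; rewrite sact_split sact_allG. Qed.

Lemma allG_winv a : allG (winv a) = allG a.
Proof. by rewrite /allG /winv all_rev all_map. Qed.

Lemma sig_winv a j : allG a -> sig (winv a) j = sig a j.
Proof.
move=> Ha.
have := sact_rev_l a (j, false).
rewrite -sact_winv (sact_gw _ _ Ha) sact_gw ?allG_winv // /=.
case=> E; move: E; rewrite /sig; case: (sact a (j,false)).2; case: (sact (winv a) (j,false)).2 => //.
Qed.

Lemma act_winv w k : act (winv w) k = act (rev w) k.
Proof. by rewrite !(act_sact _ _ false) sact_winv. Qed.

Theorem mainTheorem11 (n : nat) (hn : 2 <= n) :
  exists psi : word -> word,
    (* psi_H : TVH_n -> A_n is well defined *)
    (forall w, in_TVH n w -> gamma_word n (psi w)) /\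
    (forall w1 w2, in_TVH n w1 -> in_TVH n w2 -> weq n w1 w2 ->
       weq n (psi w1) (psi w2)) /\
    (* homomorphism *)
    (forall w1 w2, in_TVH n w1 -> in_TVH n w2 ->
       weq n (psi (w1 ++ w2)) (psi w1 ++ psi w2)) /\
    (* values on generators *)
    (forall k l, 1 <= k <= n -> 1 <= l <= n -> k <> l -> weq n (psi (xw k l)) [::]) /\
    (forall j, 1 <= j <= n -> weq n (psi [:: gm j]) [:: gm j]) /\
    (* identity on A_n (hence surjective) *)
    (forall a, gamma_word n a -> weq n (psi a) a) /\
    (let HL := fun w => in_TVH n w /\ weq n (psi w) [::] in
      (* HL_n = ker psi_H is generated by the x_ij^(0), x_ij^(i), x_ij^(j), x_ij^(ij) *)
      (forall w, in_TVH n w -> (HL w <-> gen_by n (hl_gen n) w)) /\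
      (* TVH_n = HL_n ⋊ A_n *)
      (forall w h, in_TVH n w -> HL h -> HL (conjw h w)) /\
      (forall a, gamma_word n a -> HL a -> weq n a [::]) /\
      (forall w, in_TVH n w ->
         exists h a, HL h /\ gamma_word n a /\ weq n w (h ++ a))).
Proof.
exists (fun w => NF n (sig w)).
split.
  by move=> w _; apply/gamma_wordE; exact: gw_NF.
split.
  move=> w1 w2 _ _ E; rewrite (@NF_ext n (sig w1) (sig w2)) // => j _.
  by rewrite /sig (weq_sact E).
split.
  move=> w1 w2 _ T2; rewrite NF_add.
  rewrite (@NF_ext n _ (fun j => sig w1 j (+) sig w2 j)) // => j Hj.
  by rewrite {1}/sig sact_cat (TVH_sact _ T2 Hj) sact_split /= addbC.
split.
  move=> k l _ _ _; rewrite (@NF_ext n _ (fun _ => false)) ?NF0 // => j _.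
  by rewrite /sig ftriv_xw.
split.
  move=> j Hj; symmetry; apply: NF_eq; by rewrite /gw /= Hj.
split.
  by move=> a /gamma_wordE Ha; symmetry; exact: NF_eq.
move=> HL; rewrite {}/HL.
split.
  move=> w Tw; split.
    case=> _ /psi_nil Hs.
    have [H [g [c [GH Hg Hc E]]]] := MAIN Tw.1.
    have FH := Gen_ftriv GH.
    have Tgc : forall k, 1 <= k <= n -> act c k = k /\ sig g k = false.
      move=> k Hk.
      have := weq_sact E (k, false).
      rewrite !sact_cat FH (TVH_sact _ Tw Hk) (Hs k Hk) (sact_rwb _ _ Hc).
      rewrite sact_gw; last exact: (gw_allG Hg).
      move=> [E1 E2]; split; first by rewrite -E1.
      by rewrite E1 -E2.
    have Cc : weq n c [::].
      apply: (@COX n n) => //.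
      - by rewrite subn1 in Hc.
      - by move=> x Hx; have [-> _] := Tgc x Hx.
    have Cg : weq n g [::].
      apply: G1 => // j Hj; have [_ ->] := Tgc j Hj; by [].
    apply: (@Gen_weq n H) => //.
    by rewrite E Cg Cc /= cats0.
  move=> Gw; split => //; apply/psi_nil => j Hj.
  by rewrite /sig (Gen_ftriv Gw).
split.
  move=> w h Tw [Th /psi_nil Hs]; split.
    split.
      by rewrite /conjw !valid_cat valid_winv Tw.1 Th.1.
    move=> k Hk; rewrite /conjw !act_cat Tw.2 // Th.2 // act_winv.
    by rewrite -{1}(Tw.2 k Hk) act_rev_l.
  apply/psi_nil => j Hj.
  rewrite /sig /conjw !sact_cat (TVH_sact _ Tw Hj) (TVH_sact _ Th Hj) (Hs j Hj) addbF.
  by rewrite -(TVH_sact _ Tw Hj) sact_winv sact_rev_l.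
split.
  move=> a /gamma_wordE Ha [Ta /psi_nil Hs].
  by rewrite (NF_eq Ha) (@NF_ext n _ (fun _ => false)) ?NF0.
move=> w Tw.
set a := NF n (sig w).
have Ga : gw n a by exact: gw_NF.
have AGa : allG a by exact: (gw_allG Ga).
exists (w ++ winv a), a; split; last split.
- split.
    split.
      rewrite valid_cat valid_winv Tw.1 /=.
      by have [] := (gamma_wordE n a).2 Ga.
    move=> k Hk; rewrite act_cat (act_sact (winv a) k false) sact_gw ?allG_winv //=.
    exact: Tw.2 k Hk.
  apply/psi_nil => j Hj.
  rewrite /sig sact_cat sact_gw ?allG_winv // (TVH_sact _ Tw Hj) /=.
  by rewrite sig_winv // sig_NF // addbb.
- by apply/gamma_wordE.
- by rewrite -catA cancelL cats0.
Qed.
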